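(* Let $\mathcal{M}=(\mathcal{V}',\mathcal{E}')$ be a finite graph with shortest-path distance $d_{\mathcal{M}}$, and let $d,\ell\ge1$ be integers. Let $A_1,\dots,A_\ell\in\mathbb{R}^{|\mathcal{V}'|d\times|\mathcal{V}'|d}$ be block matrices with $d\times d$ blocks $(A_i)_{u,q}$ indexed by $u,q\in\mathcal{V}'$, and suppose there exist $C_i\ge0$ and $0\le\lambda<1$ such that $\|(A_i)_{u,q}\|\le C_i\lambda^{d_{\mathcal{M}}(u,q)}$ for all $u,q\in\mathcal{V}'$ and all $i$. Choose $\delta>0$ with $\lambda'=\lambda+\delta<1$, and suppose \[ \tilde a:=\sum_{k=0}^\infty\Big(\frac{\lambda}{\lambda'}\Big)^k\sup_{u\in\mathcal{V}'}|\partial N_u^k|<\infty. \] Then for all $u,v\in\mathcal{V}'$, \[ \Big\|\Big(\prod_{i=1}^\ell A_i\Big)_{u,v}\Big\|\le C'(\lambda')^{d_{\mathcal{M}}(u,v)},\qquad C'=\tilde a^{\,\ell}\prod_{i=1}^\ell C_i. \]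
   Context: $\|\cdot\|$ is the induced 2-norm on matrices. $N_u^k=\{q\in\mathcal{V}':d_{\mathcal{M}}(u,q)\le k\}$ and $\partial N_u^k=N_u^k\setminus N_u^{k-1}$ (with $N_u^{-1}=\emptyset$). *)

(* Defs.v *)
From HB Require Import structures.
From mathcomp Require Import all_boot all_order all_algebra.
From mathcomp Require Import all_classical all_reals all_analysis.
Set Implicit Arguments. Unset Strict Implicit. Unset Printing Implicit Defensive.
Import Order.TTheory GRing.Theory Num.Theory.
Local Open Scope ring_scope.

Definition walkb (V : finType) (e : rel V) (u v : V) (k : nat) : bool :=
  [exists p : k.-tuple V, path e u p && (last u p == v)].

(* Shortest-path distance: Some k with k minimal such that a walk of length *)
(* k exists (a shortest walk is a path, so has < #|V| edges); None (= +oo)  *)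
(* if v is unreachable from u.                                              *)
Definition gdist (V : finType) (e : rel V) (u v : V) : option nat :=
  let k := find (walkb e u v) (iota 0 #|V|) in
  if (k < #|V|)%N then Some k else None.

(* lam ^ d with the convention lam ^ (+oo) = 0 *)
Definition dpow (R : realType) (lam : R) (k : option nat) : R :=
  if k is Some j then lam ^+ j else 0.

Definition nbhd (V : finType) (e : rel V) (u : V) (k : nat) : {set V} :=
  [set q | if gdist e u q is Some j then (j <= k)%N else false].

Definition bnbhd (V : finType) (e : rel V) (u : V) (k : nat) : {set V} :=
  nbhd e u k :\: (if k is k'.+1 then nbhd e u k' else finset.set0).

Definition vnorm2 (R : realType) (d : nat) (x : 'cV[R]_d) : R :=
  Num.sqrt (\sum_(i < d) x i ord0 ^+ 2).

Definition opnorm2 (R : realType) (d : nat) (M : 'M[R]_d) : R :=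
  sup [set vnorm2 (M *m x) | x in [set x : 'cV[R]_d | vnorm2 x = 1]].

(* The d x d block (u,q) of a |V|d x |V|d matrix; row index of (u,a) is    *)
(* the mxvec_index of (enum_rank u, a), i.e. enum_rank u * d + a.           *)
Definition block (R : realType) (V : finType) (d : nat)
    (A : 'M[R]_(#|V| * d)) (u q : V) : 'M[R]_d :=
  \matrix_(a < d, b < d) A (mxvec_index (enum_rank u) a) (mxvec_index (enum_rank q) b).

Definition mxprod (R : realType) (n l : nat) (A : 'I_l -> 'M[R]_n) : 'M[R]_n :=
  \big[mulmx/1%:M]_(i < l) A i.

Definition aterm (R : realType) (V : finType) (e : rel V) (lam lam' : R)
    (k : nat) : R :=
  (lam / lam') ^+ k * (\max_(u : V) #|bnbhd e u k|)%:R.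

(* Main.v *)
Require Import Defs.
From HB Require Import structures.
From mathcomp Require Import all_boot all_order all_algebra.
From mathcomp Require Import all_classical all_reals all_analysis.
From mathcomp Require Import ring lra.
Import Order.TTheory GRing.Theory Num.Theory numFieldNormedType.Exports.
Local Open Scope ring_scope.



Set Implicit Arguments. Unset Strict Implicit.
Section Graph.
Variables (V : finType) (e : rel V).

Lemma walkbP u v k : reflect (exists s : seq V, [/\ size s = k, path e u s & last u s = v])
  (walkb e u v k).
Proof.
apply: (iffP existsP) => [[p /andP[hp /eqP hl]]|[s [hs hp hl]]].
  by exists (val p); rewrite size_tuple.
have hs' : size s == k by rewrite hs.
by exists (Tuple hs') => /=; rewrite hp hl eqxx.
Qed.

Lemma walk_cat u q v a b : walkb e u q a -> walkb e q v b -> walkb e u v (a + b).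
Proof.
move=> /walkbP[s [hs hp hl]] /walkbP[t [ht hq hm]]; apply/walkbP.
exists (s ++ t); rewrite size_cat hs ht cat_path last_cat hl hp hq; split => //.
Qed.

Lemma walk_rev (he : symmetric e) u v k : walkb e u v k -> walkb e v u k.
Proof.
move=> /walkbP[s [hs hp hl]]; apply/walkbP.
exists (rev (belast u s)); rewrite size_rev size_belast hs; split => //.
  rewrite -hl rev_path; apply: sub_path hp => x y; by rewrite he.
case: s hs hp hl => [|x s] //= _ _ _; by rewrite rev_cons last_rcons.
Qed.

Lemma walk_short u v k : walkb e u v k -> exists j, (j < #|V|)%N /\ walkb e u v j.
Proof.
move=> /walkbP[s [hs hp hl]].
case: (shortenP hp) hl => s' hp' hu _ hl.
exists (size s'); split; last by apply/walkbP; exists s'.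
by move/card_uniqP: hu => /= <-; apply: max_card.
Qed.

Lemma gdist_walk u v k : gdist e u v = Some k -> walkb e u v k /\ (k < #|V|)%N.
Proof.
rewrite /gdist; set f := find _ _; case: ifP => // hf [<-]; split => //.
have := nth_find 0%N (s := iota 0 #|V|) (a := walkb e u v).
rewrite -/f nth_iota ?add0n //; apply; rewrite has_find size_iota //.
Qed.

Lemma walk_gdist u v k : walkb e u v k -> exists c, gdist e u v = Some c /\ (c <= k)%N.
Proof.
move=> hw; have [j [hj hwj]] := walk_short hw.
have hfj : (find (walkb e u v) (iota 0 #|V|) <= j)%N.
  rewrite leqNgt; apply/negP => hlt.
  have := before_find 0%N hlt; rewrite nth_iota // add0n hwj //.
have hfk : (find (walkb e u v) (iota 0 #|V|) <= k)%N.
  case: (ltnP k #|V|) => hk.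
    rewrite leqNgt; apply/negP => hlt.
    have := before_find 0%N hlt; rewrite nth_iota // add0n hw //.
  exact: leq_trans hfj (ltnW (leq_trans hj hk)).
exists (find (walkb e u v) (iota 0 #|V|)); split => //.
by rewrite /gdist (leq_ltn_trans hfj hj).
Qed.

Lemma gdist_refl u : gdist e u u = Some 0%N.
Proof.
have [c [hc]] := @walk_gdist u u 0 (introT (walkbP u u 0) (ex_intro _ [::] (And3 erefl erefl erefl))).
by rewrite leqn0 => /eqP c0; rewrite hc c0.
Qed.

Lemma gdist_sym (he : symmetric e) u v : gdist e u v = gdist e v u.
Proof.
rewrite /gdist (@eq_find _ (walkb e u v) (walkb e v u)) //.
by move=> k; apply/idP/idP; apply: walk_rev.
Qed.

Lemma gdist_tri u q v a b : gdist e u q = Some a -> gdist e q v = Some b ->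
  exists c, gdist e u v = Some c /\ (c <= a + b)%N.
Proof.
move=> /gdist_walk[h1 _] /gdist_walk[h2 _]; exact: walk_gdist (walk_cat h1 h2).
Qed.

Lemma gdist_lt u v k : gdist e u v = Some k -> (k < #|V|)%N.
Proof. by case/gdist_walk. Qed.

Lemma bnbhdE u k q : (q \in bnbhd e u k) = (gdist e u q == Some k).
Proof.
rewrite /bnbhd inE /nbhd; case: k => [|k]; rewrite !inE.
  by case: (gdist e u q) => // j; case: j.
case: (gdist e u q) => // j; rewrite -ltnNge.
have -> : (Some j == Some k.+1) = (j == k.+1) by [].
by rewrite eqn_leq andbC.
Qed.

End Graph.

Unset Implicit Arguments. Set Strict Implicit.


Section Norms.
Variables (R : realType) (d : nat).
Implicit Types (x y : 'cV[R]_d) (M N : 'M[R]_d).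

Lemma sq_ge0 x : 0 <= \sum_i x i ord0 ^+ 2.
Proof. by apply: sumr_ge0 => i _; rewrite sqr_ge0. Qed.

Lemma vnorm2_ge0 x : 0 <= vnorm2 x.
Proof. exact: sqrtr_ge0. Qed.

Lemma vnorm2_sq x : vnorm2 x ^+ 2 = \sum_i x i ord0 ^+ 2.
Proof. by rewrite /vnorm2 sqr_sqrtr // sq_ge0. Qed.

Lemma vnorm2_eq0 x : vnorm2 x = 0 -> x = 0.
Proof.
move=> h; have : \sum_i x i ord0 ^+ 2 = 0 by rewrite -vnorm2_sq h expr0n.
move/psumr_eq0P => H; apply/matrixP => i j; rewrite (ord1 j) mxE.
by apply/eqP; rewrite -sqrf_eq0; apply/eqP/H => // k _; rewrite sqr_ge0.
Qed.

Lemma vnorm2_0 : vnorm2 (0 : 'cV[R]_d) = 0.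
Proof. by rewrite /vnorm2 big1 ?sqrtr0 // => i _; rewrite mxE expr0n. Qed.

Lemma vnorm2Z a x : vnorm2 (a *: x) = `|a| * vnorm2 x.
Proof.
rewrite /vnorm2 (eq_bigr (fun i => a ^+ 2 * x i ord0 ^+ 2)); last first.
  by move=> i _; rewrite mxE exprMn.
by rewrite -mulr_sumr sqrtrM ?sqr_ge0 // sqrtr_sqr.
Qed.

Lemma cauchy_schwarz x y :
  \sum_i x i ord0 * y i ord0 <= vnorm2 x * vnorm2 y.
Proof.
have [a0|a0] := eqVneq (vnorm2 x) 0.
  by rewrite (vnorm2_eq0 _ a0) big1 ?vnorm2_0 ?mul0r // => i _; rewrite mxE mul0r.
have [b0|b0] := eqVneq (vnorm2 y) 0.
  by rewrite (vnorm2_eq0 _ b0) big1 ?vnorm2_0 ?mulr0 // => i _; rewrite mxE mulr0.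
set a := vnorm2 x; set b := vnorm2 y; set S := \sum_i _.
have ha : 0 < a by rewrite lt0r a0 vnorm2_ge0.
have hb : 0 < b by rewrite lt0r b0 vnorm2_ge0.
have key : 2 * a * b * S <= 2 * a ^+ 2 * b ^+ 2.
  have -> : 2 * a ^+ 2 * b ^+ 2 =
     \sum_i (x i ord0 ^+ 2 * b ^+ 2 + y i ord0 ^+ 2 * a ^+ 2).
    rewrite big_split /= -!mulr_suml -!vnorm2_sq -/a -/b; ring.
  rewrite /S mulr_sumr; apply: ler_sum => i _.
  have := sqr_ge0 (x i ord0 * b - y i ord0 * a); nra.
have hab : 0 < 2 * a * b by rewrite !mulr_gt0.
rewrite -(ler_pM2l hab); apply: le_trans key _; rewrite le_eqVlt; apply/orP; left.
apply/eqP; ring.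
Qed.

Lemma vnorm2D x y : vnorm2 (x + y) <= vnorm2 x + vnorm2 y.
Proof.
rewrite -(ler_pXn2r (n:=2)) // ?nnegrE ?addr_ge0 ?vnorm2_ge0 //.
rewrite vnorm2_sq (eq_bigr (fun i => x i ord0 ^+ 2 + y i ord0 ^+ 2
   + 2 * (x i ord0 * y i ord0))); last by move=> i _; rewrite mxE; ring.
rewrite !big_split /= -mulr_sumr -!vnorm2_sq.
have := cauchy_schwarz x y; set S := \sum_i _ => h.
have : (vnorm2 x + vnorm2 y) ^+ 2 = vnorm2 x ^+ 2 + vnorm2 y ^+ 2 + 2 * (vnorm2 x * vnorm2 y) by ring.
move=> ->; lra.
Qed.

Lemma vnorm2_sum (I : finType) (F : I -> 'cV[R]_d) :
  vnorm2 (\sum_i F i) <= \sum_i vnorm2 (F i).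
Proof.
apply: (big_ind2 (fun a b => vnorm2 a <= b)).
- by rewrite vnorm2_0.
- by move=> a b c e h1 h2; apply: le_trans (vnorm2D _ _) _; exact: lerD.
- by [].
Qed.


Lemma col_decomp M x : M *m x = \sum_j x j ord0 *: col j M.
Proof.
apply/matrixP => i k; rewrite (ord1 k) !mxE summxE; apply: eq_bigr => j _.
by rewrite !mxE mulrC.
Qed.

Lemma coord_le1 x j : vnorm2 x = 1 -> `|x j ord0| <= 1.
Proof.
move=> h; have : x j ord0 ^+ 2 <= 1.
  rewrite -(expr1n _ 2) -h vnorm2_sq (bigD1 j) //= lerDl.
  by apply: sumr_ge0 => i _; rewrite sqr_ge0.
rewrite -real_normK ?num_real // => h2.
by rewrite -(ler_pXn2r (n:=2)) ?nnegrE ?normr_ge0 // expr1n.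
Qed.

Lemma opnorm_bnd M : has_ubound [set vnorm2 (M *m x) | x in [set x : 'cV[R]_d | vnorm2 x = 1]].
Proof.
exists (\sum_j vnorm2 (col j M)) => _ [x hx <-].
rewrite col_decomp; apply: le_trans (vnorm2_sum _ _) _; apply: ler_sum => j _.
rewrite vnorm2Z; rewrite -[X in _ <= X]mul1r; apply: ler_wpM2r.
  exact: vnorm2_ge0.
exact: coord_le1.
Qed.

Lemma opnorm_ub M x : vnorm2 x = 1 -> vnorm2 (M *m x) <= opnorm2 M.
Proof. by move=> hx; apply: (ub_le_sup (opnorm_bnd M)); exists x. Qed.

Hypothesis hd : (0 < d)%N.

Lemma e0_unit : vnorm2 (delta_mx (Ordinal hd) ord0 : 'cV[R]_d) = 1.
Proof.
rewrite /vnorm2 (bigD1 (Ordinal hd)) //= big1 ?addr0 ?mxE ?eqxx ?expr1n ?sqrtr1 //.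
by move=> i /negPf hi; rewrite mxE hi /= expr0n.
Qed.

Lemma opnorm_le M K : (forall x, vnorm2 x = 1 -> vnorm2 (M *m x) <= K) ->
  opnorm2 M <= K.
Proof.
move=> h; apply: ge_sup.
  by exists (vnorm2 (M *m delta_mx (Ordinal hd) ord0)); exists (delta_mx (Ordinal hd) ord0) => //; exact: e0_unit.
by move=> _ [x hx <-]; exact: h.
Qed.

Lemma opnorm_ge0 M : 0 <= opnorm2 M.
Proof. exact: le_trans (vnorm2_ge0 _) (opnorm_ub M _ e0_unit). Qed.

Lemma opnorm_vec M x : vnorm2 (M *m x) <= opnorm2 M * vnorm2 x.
Proof.
have [n0|n0] := eqVneq (vnorm2 x) 0.
  by rewrite (vnorm2_eq0 _ n0) mulmx0 vnorm2_0 mulr0.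
have hn : 0 < vnorm2 x by rewrite lt0r n0 vnorm2_ge0.
have hy : vnorm2 ((vnorm2 x)^-1 *: x) = 1.
  by rewrite vnorm2Z ger0_norm ?invr_ge0 ?vnorm2_ge0 // mulVf.
have := opnorm_ub M _ hy; rewrite -scalemxAr vnorm2Z ger0_norm ?invr_ge0 ?vnorm2_ge0 //.
by rewrite ler_pdivrMl // mulrC.
Qed.

Lemma opnorm_sum (I : finType) (F : I -> 'M[R]_d) :
  opnorm2 (\sum_i F i) <= \sum_i opnorm2 (F i).
Proof.
apply: opnorm_le => x hx; rewrite mulmx_suml.
apply: le_trans (vnorm2_sum _ _) _; apply: ler_sum => i _; exact: opnorm_ub.
Qed.

Lemma opnorm_mul M N : opnorm2 (M *m N) <= opnorm2 M * opnorm2 N.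
Proof.
apply: opnorm_le => x hx; rewrite -mulmxA.
apply: le_trans (opnorm_vec _ _) _; apply: ler_wpM2l; first exact: opnorm_ge0.
exact: opnorm_ub.
Qed.

End Norms.


Lemma block_mul (R : realType) (V : finType) (d : nat) (M N : 'M[R]_(#|V| * d)) u v :
  block (M *m N) u v = \sum_q block M u q *m block N q v.
Proof.
apply/matrixP => a b; rewrite !mxE summxE.
rewrite (reindex (uncurry (@mxvec_index #|V| d))) /=; last exact: curry_mxvec_bij.
rewrite [RHS](reindex (@enum_val V predT)) /=; last first.
  by exists (@enum_rank V) => i _; [apply: enum_valK | apply: enum_rankK].
rewrite [RHS](eq_bigr (fun i => \sum_c M (mxvec_index (enum_rank u) a) (mxvec_index i c) *
      N (mxvec_index i c) (mxvec_index (enum_rank v) b))); last first.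
  by move=> i _; rewrite !mxE; apply: eq_bigr => c _; rewrite !mxE enum_valK.
rewrite pair_bigA; apply: eq_bigr => -[i c] _ //.
Qed.

Lemma mxvec_index_eq (m n : nat) (i j : 'I_m) (a b : 'I_n) :
  (mxvec_index i a == mxvec_index j b) = (i == j) && (a == b).
Proof. by rewrite /mxvec_index (inj_eq (@cast_ord_inj _ _ _)) (inj_eq (@enum_rank_inj _)). Qed.

Lemma block1_neq (R : realType) (V : finType) (d : nat) (u v : V) : u != v ->
  block (1%:M : 'M[R]_(#|V| * d)) u v = 0.
Proof.
move=> huv; apply/matrixP => a b; rewrite !mxE mxvec_index_eq (inj_eq (@enum_rank_inj _)).
by rewrite (negPf huv).
Qed.

Lemma block1_eq (R : realType) (V : finType) (d : nat) (u : V) :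
  block (1%:M : 'M[R]_(#|V| * d)) u u = 1%:M.
Proof. by apply/matrixP => a b; rewrite !mxE mxvec_index_eq eqxx. Qed.

Lemma mxbig_recr (R : realType) k n (F : 'I_n.+1 -> 'M[R]_k) :
  \big[mulmx/1%:M]_(i < n.+1) F i =
  \big[mulmx/1%:M]_(i < n) F (widen_ord (leqnSn n) i) *m F ord_max.
Proof.
elim: n F => [|n IH] F.
  rewrite big_ord_recl !big_ord0 mulmx1 mul1mx; congr F; exact: val_inj.
rewrite [LHS]big_ord_recl [in LHS]IH [in RHS]big_ord_recl mulmxA.
congr (_ *m _ *m _); first (congr F; exact: val_inj).
  by apply: eq_bigr => i _; congr F; exact: val_inj.
congr F; exact: val_inj.
Qed.

Section Main.
Variables (R : realType) (V : finType) (e : rel V) (he : symmetric e) (d : nat) (hd : (0 < d)%N).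
Variables (lam delta : R).
Hypotheses (hlam0 : 0 <= lam) (hdelta : 0 < delta) (hlam' : lam + delta < 1).
Local Notation lam' := (lam + delta).
Local Notation r := (lam / lam').
Local Notation at_ := (limn (series (aterm e lam lam'))).
Hypothesis (hfin : cvgn (series (aterm e lam lam'))).

Lemma lam'_gt0 : 0 < lam'. Proof. move: (hlam0) (hdelta) => ? ?; lra. Qed.

Lemma r_ge0 : 0 <= r. Proof. by rewrite divr_ge0 // ltW // lam'_gt0. Qed.

Lemma dpow_ge0 (x : R) k : 0 <= x -> 0 <= dpow x k.
Proof. by case: k => //= j hx; rewrite exprn_ge0. Qed.

Lemma aterm_ge0 k : 0 <= aterm e lam lam' k.
Proof. by rewrite /aterm mulr_ge0 ?exprn_ge0 ?r_ge0. Qed.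

Lemma series_le n : series (aterm e lam lam') n <= at_.
Proof.
apply: nondecreasing_cvgn_le => //.
apply: (nondecreasing_series (P := xpredT) (m := 0%N)) => k _ _; exact: aterm_ge0.
Qed.

Lemma at_ge0 : 0 <= at_.
Proof. by apply: le_trans (series_le 0); rewrite /series /= big_geq. Qed.

Lemma dpow_sum (x : R) (v q : V) :
  dpow x (gdist e v q) = \sum_(k < #|V|) (gdist e v q == Some (k : nat))%:R * x ^+ k.
Proof.
case h: (gdist e v q) => [j|] /=; last by rewrite big1 // => k _; rewrite mul0r.
have hj := gdist_lt h.
rewrite (bigD1 (Ordinal hj)) //= big1 ?addr0 ?eqxx ?mul1r // => k hk.
have -> : (Some j == Some (k : nat)) = (j == k) by [].
by rewrite eq_sym -(inj_eq val_inj) /= in hk; rewrite (negPf hk) mul0r.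
Qed.

Lemma sum_dpow_le (v : V) : \sum_q dpow r (gdist e v q) <= at_.
Proof.
under eq_bigr do rewrite dpow_sum.
rewrite exchange_big /=; apply: le_trans (series_le #|V|).
rewrite /series /= big_mkord; apply: ler_sum => k _.
rewrite -mulr_suml /aterm mulrC; apply: ler_wpM2l; first by rewrite exprn_ge0 ?r_ge0.
rewrite -natr_sum ler_nat; apply: leq_trans (leq_bigmax v).
rewrite -[#|bnbhd e v k|]sum1_card [leqRHS]big_mkcond /=; apply: leq_sum => q _.
by rewrite bnbhdE; case: (_ == _).
Qed.

Lemma lam'_ge0 : 0 <= lam'. Proof. exact: ltW lam'_gt0. Qed.
Lemma lam'_le1 : lam' <= 1. Proof. exact: ltW. Qed.

Lemma step_q (u q v : V) : dpow lam' (gdist e u q) * dpow lam (gdist e q v)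
   <= dpow lam' (gdist e u v) * dpow r (gdist e v q).
Proof.
case h1: (gdist e u q) => [a|]; last by rewrite /= mul0r mulr_ge0 ?dpow_ge0 ?r_ge0 ?lam'_ge0.
case h2: (gdist e q v) => [b|]; last by rewrite /= mulr0 mulr_ge0 ?dpow_ge0 ?r_ge0 ?lam'_ge0.
have [c [h3 hc]] := gdist_tri h1 h2.
rewrite h3 (gdist_sym he v q) h2 /=.
have -> : lam ^+ b = r ^+ b * lam' ^+ b by rewrite -exprMn divfK // lt0r_neq0 // lam'_gt0.
rewrite mulrCA -exprD mulrC; apply: ler_wpM2r; first by rewrite exprn_ge0 ?r_ge0.
exact: (ler_wiXn2l lam'_ge0 lam'_le1 hc).
Qed.

Lemma main_ind l (A : 'I_l -> 'M[R]_(#|V| * d)) (C : 'I_l -> R)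
  (hC : forall i, 0 <= C i)
  (hA : forall i u q, opnorm2 (block (A i) u q) <= C i * dpow lam (gdist e u q)) u v :
  opnorm2 (block (mxprod A) u v) <= at_ ^+ l * (\prod_(i < l) C i) * dpow lam' (gdist e u v).
Proof.
elim: l A C hC hA u v => [|l IH] A C hC hA u v.
  rewrite /mxprod !big_ord0 expr0 !mul1r.
  have [->|huv] := eqVneq u v.
    rewrite block1_eq gdist_refl /= expr0; apply: (@opnorm_le _ _ hd) => x hx.
    by rewrite mul1mx hx.
  rewrite block1_neq //; apply: le_trans (_ : opnorm2 0 <= 0) _.
    by apply: (@opnorm_le _ _ hd) => x _; rewrite mul0mx vnorm2_0.
  exact: dpow_ge0 lam'_ge0.
pose B := fun i : 'I_l => A (widen_ord (leqnSn l) i).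
pose CB := fun i : 'I_l => C (widen_ord (leqnSn l) i).
have hIH := IH B CB (fun i => hC _) (fun i => hA _).
set K := at_ ^+ l * \prod_(i < l) CB i.
have hK : 0 <= K by rewrite mulr_ge0 ?exprn_ge0 ?at_ge0 //; apply: prodr_ge0 => i _; exact: hC.
rewrite /mxprod mxbig_recr block_mul.
apply: le_trans (@opnorm_sum _ _ hd _ _) _.
have hq : forall q, opnorm2 (block (\big[mulmx/1%:M]_(i < l) B i) u q *m block (A ord_max) q v)
   <= (K * dpow lam' (gdist e u q)) * (C ord_max * dpow lam (gdist e q v)).
  move=> q; apply: le_trans (@opnorm_mul _ _ hd _ _) _.
  apply: ler_pM; [exact: (@opnorm_ge0 _ _ hd) | exact: (@opnorm_ge0 _ _ hd) | exact: hIH | exact: hA].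
apply: le_trans; first by apply: ler_sum => q _; exact: hq.
apply: le_trans (_ : \sum_q (K * C ord_max * dpow lam' (gdist e u v)) * dpow r (gdist e v q) <= _).
  apply: ler_sum => q _; rewrite mulrACA -[X in _ <= X]mulrA.
  apply: ler_wpM2l; [by rewrite mulr_ge0 // hC | exact: step_q].
rewrite -mulr_sumr.
apply: le_trans (ler_wpM2l _ (sum_dpow_le v)) _.
  by apply: mulr_ge0; [apply: mulr_ge0 | apply: dpow_ge0; exact: lam'_ge0].
rewrite big_ord_recr exprSr /= -/(CB _) le_eqVlt; apply/orP; left; apply/eqP.
rewrite /K; ring.
Qed.
End Main.

Theorem lemmaC3 (R : realType) (V : finType) (e : rel V) (he : symmetric e)
    (d l : nat) (hd : (0 < d)%N) (hl : (0 < l)%N)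
    (A : 'I_l -> 'M[R]_(#|V| * d)) (C : 'I_l -> R) (lam delta : R)
    (hC : forall i, 0 <= C i) (hlam0 : 0 <= lam) (hlam1 : lam < 1)
    (hA : forall i u q, opnorm2 (block (A i) u q) <= C i * dpow lam (gdist e u q))
    (hdelta : 0 < delta) (hlam' : lam + delta < 1)
    (hfin : cvgn (series (aterm e lam (lam + delta)))) :
  forall u v : V,
    opnorm2 (block (mxprod A) u v) <=
      (limn (series (aterm e lam (lam + delta)))) ^+ l * (\prod_(i < l) C i)
        * dpow (lam + delta) (gdist e u v).
Proof.
move=> u v; by apply: main_ind.
Qed.
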